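(* Let $G=(V,E)$ be a connected graph on $V=\{1,\dots,n\}$ with incidence matrix $B$ and Laplacian $L=BB^T$. For every $\Delta\in\mathbb{R}^{|E|}$ and all $i,j\in V$, $$\left|\Delta^TB^TL^\dagger(e_i-e_j)\right|\le\|\Delta\|_\infty\sqrt{\Omega_{ij}\,|E_{ij}|}.$$
   Context: Each edge of $G$ is given an arbitrary orientation; $B\in\mathbb{R}^{n\times|E|}$ has, in the column of edge $(a,b)$, $+1$ in row $a$, $-1$ in row $b$ and zeros elsewhere. $L^\dagger$ is the Moore–Penrose pseudoinverse of $L$. $\Omega_{ij}=(e_i-e_j)^TL^\dagger(e_i-e_j)$ is the effective resistance between $i$ and $j$ when every edge is a unit resistor. $E_{ij}$ is the set of edges lying on at least one simple path from $i$ to $j$. *)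

(* Defs.v *)
From mathcomp Require Import all_boot all_order all_algebra.
Set Implicit Arguments. Unset Strict Implicit. Unset Printing Implicit Defensive.
Import Order.TTheory GRing.Theory Num.Theory.
Local Open Scope ring_scope.

(* A graph on vertices 'I_n with m edges; edge e is oriented from
   src e to tgt e (arbitrary orientation). *)

Definition simple_graph n m (src tgt : 'I_m -> 'I_n) : Prop :=
  (forall e, src e != tgt e) /\
  (forall e f, [set src e; tgt e] = [set src f; tgt f] -> e = f).

Definition adj n m (src tgt : 'I_m -> 'I_n) : rel 'I_n :=
  fun u v => [exists e, ((src e == u) && (tgt e == v)) || ((src e == v) && (tgt e == u))].

Definition connected_graph n m (src tgt : 'I_m -> 'I_n) : Prop :=
  forall u v : 'I_n, connect (adj src tgt) u v.

Definition incidence n m (R : nzRingType) (src tgt : 'I_m -> 'I_n) : 'M[R]_(n, m) :=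
  \matrix_(v, e) ((v == src e)%:R - (v == tgt e)%:R).

Definition laplacian n m (R : nzRingType) (src tgt : 'I_m -> 'I_n) : 'M[R]_n :=
  incidence R src tgt *m (incidence R src tgt)^T.

Definition is_MP_pinv (R : numFieldType) n (A X : 'M[R]_n) : Prop :=
  [/\ A *m X *m A = A, X *m A *m X = X,
      (A *m X)^T = A *m X & (X *m A)^T = X *m A].

Definition basis_vec (R : nzRingType) n (i : 'I_n) : 'cV[R]_n := delta_mx i 0.

Definition eff_res (R : numFieldType) n (Ldag : 'M[R]_n) (i j : 'I_n) : R :=
  ((basis_vec R i - basis_vec R j)^T *m Ldag *m (basis_vec R i - basis_vec R j)) 0 0.

Definition simple_path n m (src tgt : 'I_m -> 'I_n) (i j : 'I_n) (p : seq 'I_n) : bool :=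
  [&& path (adj src tgt) i p, uniq (i :: p) & last i p == j].

Definition edge_on n m (src tgt : 'I_m -> 'I_n) (e : 'I_m) (s : seq 'I_n) : bool :=
  has (fun uv : 'I_n * 'I_n =>
         ((uv.1 == src e) && (uv.2 == tgt e)) || ((uv.1 == tgt e) && (uv.2 == src e)))
      (zip s (behead s)).

Definition path_edges n m (src tgt : 'I_m -> 'I_n) (i j : 'I_n) : {set 'I_m} :=
  [set e | [exists k : 'I_n, exists p : k.-tuple 'I_n,
              simple_path src tgt i j p && edge_on src tgt e (i :: p)]].
(* Note: a simple path i :: p has uniq (i :: p), hence size p < n, so
   quantifying over tuples of length k < n covers all simple paths. *)

Definition inf_norm (R : numDomainType) m (x : 'cV[R]_m) : R :=
  \big[Num.max/0]_(k < m) `|x k 0|.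

(* Main.v *)
Require Import Defs.
From mathcomp Require Import all_boot all_order all_algebra.
From mathcomp Require Import lra.
Import Order.TTheory GRing.Theory Num.Theory.
Local Open Scope ring_scope.
Module P1.
Set Implicit Arguments. Unset Strict Implicit.

Lemma sum_delta (R : nzRingType) (T : finType) (a : T) (F : T -> R) :
  \sum_v (v == a)%:R * F v = F a.
Proof.
rewrite (bigD1 a) //= eqxx mul1r big1 ?addr0 // => v /negbTE ->; by rewrite mul0r.
Qed.

Lemma sum_deltar (R : nzRingType) (T : finType) (a : T) (F : T -> R) :
  \sum_v F v * (v == a)%:R = F a.
Proof.
rewrite (bigD1 a) //= eqxx mulr1 big1 ?addr0 // => v /negbTE ->; by rewrite mulr0.
Qed.

Lemma BtE (R : nzRingType) n m (src tgt : 'I_m -> 'I_n) (g : 'cV[R]_n) e :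
  ((incidence R src tgt)^T *m g) e 0 = g (src e) 0 - g (tgt e) 0.
Proof.
rewrite !mxE; under eq_bigr do rewrite !mxE mulrBl.
by rewrite sumrB !sum_delta.
Qed.

Lemma adj_sym n m (src tgt : 'I_m -> 'I_n) u v : adj src tgt u v = adj src tgt v u.
Proof.
by apply/existsP/existsP => -[e He]; exists e; rewrite orbC.
Qed.

Lemma sumsq (R : nzRingType) m (v : 'cV[R]_m) : (v^T *m v) 0 0 = \sum_k v k 0 ^+ 2.
Proof. rewrite mxE; apply: eq_bigr => k _; by rewrite mxE expr2. Qed.

Lemma sumsq0 (R : realFieldType) m (v : 'cV[R]_m) : (v^T *m v) 0 0 = 0 -> v = 0.
Proof.
rewrite sumsq => H; apply/matrixP => k l; rewrite (ord1 l) mxE.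
apply/eqP; rewrite -sqrf_eq0; apply/eqP.
by apply: (psumr_eq0P _ H) => // i _; rewrite sqr_ge0.
Qed.
End P1.
Import P1.
Module P2.
Set Implicit Arguments. Unset Strict Implicit.

Definition Lg (R : nzRingType) n m (src tgt : 'I_m -> 'I_n) (g : 'cV[R]_n) w :=
  (incidence R src tgt *m ((incidence R src tgt)^T *m g)) w 0.

Lemma down_step (R : realFieldType) n m (src tgt : 'I_m -> 'I_n) (g : 'cV[R]_n) w :
  0 <= Lg src tgt g w ->
  (exists y, adj src tgt w y && (g w 0 < g y 0)) ->
  exists y, adj src tgt w y && (g y 0 < g w 0).
Proof.
move=> H [y /andP [/existsP [e0 He0] Hlt]].
case: (boolP [exists y, adj src tgt w y && (g y 0 < g w 0)]) => [/existsP//|/existsPn Hn].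
exfalso; move: H; apply/negP; rewrite -ltNge /Lg mxE (bigD1 e0) //=.
have term e : incidence R src tgt w e * ((incidence R src tgt)^T *m g) e 0 <= 0.
  rewrite BtE mxE.
  case: (eqVneq w (src e)) => [ws|ns]; case: (eqVneq w (tgt e)) => [wt|nt].
  - by rewrite subrr mul0r.
  - rewrite subr0 mul1r -ws subr_le0.
    have := Hn (tgt e); rewrite negb_and -leNgt.
    have -> : adj src tgt w (tgt e) by apply/existsP; exists e; rewrite ws !eqxx.
    by [].
  - rewrite sub0r mulN1r opprB -wt subr_le0.
    have := Hn (src e); rewrite negb_and -leNgt.
    have -> : adj src tgt w (src e) by apply/existsP; exists e; rewrite wt !eqxx orbT.
    by [].
  - by rewrite subrr mul0r.
rewrite -[0 in X in _ < X](addr0 0); apply: ltr_leD; last first.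
  by rewrite sumr_le0 // => e _; apply: term.
rewrite BtE mxE.
case/orP: He0 => /andP [/eqP s /eqP t].
- have wy : w != y by apply/eqP => E; move: Hlt; rewrite E ltxx.
  by rewrite s t eqxx (negbTE wy) subr0 mul1r subr_lt0.
- have wy : w != y by apply/eqP => E; move: Hlt; rewrite E ltxx.
  by rewrite s t eqxx (negbTE wy) sub0r mulN1r opprB subr_lt0.
Qed.
End P2.
Import P2.
Module P3.
Set Implicit Arguments. Unset Strict Implicit.

Definition drel (R : realFieldType) n m (src tgt : 'I_m -> 'I_n) (g : 'cV[R]_n) : rel 'I_n :=
  fun a b => adj src tgt a b && (g b 0 < g a 0).

Lemma walk_down (R : realFieldType) n m (src tgt : 'I_m -> 'I_n) (g : 'cV[R]_n) (t : 'I_n) :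
  (forall w, w != t -> 0 <= Lg src tgt g w) ->
  forall w, (w == t) || [exists y, adj src tgt w y && (g w 0 < g y 0)] ->
  exists p, path (drel src tgt g) w p && (last w p == t).
Proof.
move=> HL.
suff H : forall (N : nat) w, leq #|[set y | g y 0 < g w 0]| N ->
  (w == t) || [exists y, adj src tgt w y && (g w 0 < g y 0)] ->
  exists p, path (drel src tgt g) w p && (last w p == t).
  by move=> w; apply: (H _ w (leqnn _)).
elim=> [|N IH] w HN Hw; (case: (eqVneq w t) => [->|wt]; first by exists [::]; rewrite /= eqxx);
  move: Hw; rewrite (negbTE wt) /= => /existsP [y Hy];
  (have [y' /andP [Ha Hl]] := down_step (HL w wt) (ex_intro _ y Hy));
  have Hpr : [set z | g z 0 < g y' 0] \proper [set z | g z 0 < g w 0].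
- apply/properP; split; first by apply/subsetP => z; rewrite !inE => /lt_trans; apply.
  by exists y'; rewrite !inE ?ltxx.
- by have := proper_card Hpr; rewrite ltnNge (leq_trans HN (leq0n _)).
- apply/properP; split; first by apply/subsetP => z; rewrite !inE => /lt_trans; apply.
  by exists y'; rewrite !inE ?ltxx.
- have := proper_card Hpr => Hc.
  have [p /andP [Hp Hl']] : exists p, path (drel src tgt g) y' p && (last y' p == t).
    apply: IH; first by rewrite -ltnS (leq_trans Hc HN).
    by apply/orP; right; apply/existsP; exists w; rewrite adj_sym Ha Hl.
  by exists (y' :: p); rewrite /= /drel Ha Hl Hp Hl'.
Qed.

Lemma Lg_opp (R : realFieldType) n m (src tgt : 'I_m -> 'I_n) (g : 'cV[R]_n) w :
  Lg src tgt (- g) w = - Lg src tgt g w.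
Proof. by rewrite /Lg !mulmxN mxE. Qed.

Lemma walk_up (R : realFieldType) n m (src tgt : 'I_m -> 'I_n) (g : 'cV[R]_n) (s : 'I_n) :
  (forall w, w != s -> Lg src tgt g w <= 0) ->
  forall w, (w == s) || [exists y, adj src tgt w y && (g y 0 < g w 0)] ->
  exists q, path (drel src tgt g) s q && (last s q == w).
Proof.
move=> HL.
suff H : forall (N : nat) w, leq #|[set y | g w 0 < g y 0]| N ->
  (w == s) || [exists y, adj src tgt w y && (g y 0 < g w 0)] ->
  exists q, path (drel src tgt g) s q && (last s q == w).
  by move=> w; apply: (H _ w (leqnn _)).
have HL' w : w != s -> 0 <= Lg src tgt (- g) w.
  by move=> ws; rewrite Lg_opp oppr_ge0 HL.
elim=> [|N IH] w HN Hw; (case: (eqVneq w s) => [->|ws]; first by exists [::]; rewrite /= eqxx);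
  move: Hw; rewrite (negbTE ws) /= => /existsP [y /andP [Hy1 Hy2]];
  (have Hex : exists y, adj src tgt w y && ((- g) w 0 < (- g) y 0)
     by exists y; rewrite !mxE ltrN2 Hy1 Hy2);
  (have [y' /andP [Ha Hl]] := down_step (HL' w ws) Hex);
  rewrite !mxE ltrN2 in Hl;
  have Hpr : [set z | g y' 0 < g z 0] \proper [set z | g w 0 < g z 0].
- apply/properP; split; first by apply/subsetP => z; rewrite !inE; apply: lt_trans.
  by exists y'; rewrite !inE ?ltxx.
- by have := proper_card Hpr; rewrite ltnNge (leq_trans HN (leq0n _)).
- apply/properP; split; first by apply/subsetP => z; rewrite !inE; apply: lt_trans.
  by exists y'; rewrite !inE ?ltxx.
- have := proper_card Hpr => Hc.
  have [q /andP [Hq Hl']] : exists q, path (drel src tgt g) s q && (last s q == y').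
    apply: IH; first by rewrite -ltnS (leq_trans Hc HN).
    by apply/orP; right; apply/existsP; exists w; rewrite adj_sym Ha Hl.
  exists (rcons q w); rewrite rcons_path Hq last_rcons eqxx (eqP Hl') /drel.
  by rewrite adj_sym Ha Hl.
Qed.
End P3.
Import P3.
Module P4.
Set Implicit Arguments. Unset Strict Implicit.

Lemma has_zip_cat (T : eqType) (P : pred (T * T)) (x0 v : T) q p :
  P (last x0 q, v) -> has P (zip (x0 :: q ++ v :: p) (q ++ v :: p)).
Proof.
elim: q x0 => [|y q IH] x0 /= H; first by rewrite H.
by rewrite IH ?orbT.
Qed.

Lemma flow_support (R : realFieldType) n m (src tgt : 'I_m -> 'I_n) (x : 'cV[R]_n) i j :
  incidence R src tgt *m ((incidence R src tgt)^T *m x) = basis_vec R i - basis_vec R j ->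
  forall e, x (src e) 0 != x (tgt e) 0 -> e \in path_edges src tgt i j.
Proof.
move=> HL e Hne.
have HLw w : Lg src tgt x w = (w == i)%:R - (w == j)%:R.
  by rewrite /Lg HL !mxE !eqxx !andbT.
have Hd w : w != j -> 0 <= Lg src tgt x w.
  by rewrite HLw => /negbTE ->; rewrite subr0 ler0n.
have Hu w : w != i -> Lg src tgt x w <= 0.
  by rewrite HLw => /negbTE ->; rewrite sub0r oppr_le0 ler0n.
have [u [v [Huv Hlt Hp]]] : exists u v, [/\ adj src tgt u v, x v 0 < x u 0 &
    ((u == src e) && (v == tgt e)) || ((u == tgt e) && (v == src e))].
  case: (ltgtP (x (src e) 0) (x (tgt e) 0)) => h.
  - exists (tgt e), (src e); split => //; last by rewrite !eqxx orbT.
    by apply/existsP; exists e; rewrite !eqxx orbT.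
  - exists (src e), (tgt e); split => //; last by rewrite !eqxx.
    by apply/existsP; exists e; rewrite !eqxx.
  - by move: Hne; rewrite h eqxx.
have Hv : (v == j) || [exists y, adj src tgt v y && (x v 0 < x y 0)].
  by apply/orP; right; apply/existsP; exists u; rewrite adj_sym Huv Hlt.
have Hu' : (u == i) || [exists y, adj src tgt u y && (x y 0 < x u 0)].
  by apply/orP; right; apply/existsP; exists v; rewrite Huv Hlt.
have [p /andP [Hp1 Hp2]] := walk_down Hd Hv.
have [q /andP [Hq1 Hq2]] := walk_up Hu Hu'.
set P := q ++ v :: p.
have HP : path (drel src tgt x) i P.
  by rewrite /P cat_path Hq1 /= (eqP Hq2) /drel Huv Hlt Hp1.
have Hlast : last i P == j by rewrite /P last_cat /= Hp2.
have Huniq : uniq (i :: P).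
  apply: (@sorted_uniq _ (fun a b => x b 0 < x a 0)).
  - by move=> a b c /= h1 h2; apply: lt_trans h2 h1.
  - by move=> a /=; rewrite ltxx.
  by apply: sub_path HP => a b /andP [].
have Hsimple : simple_path src tgt i j P.
  rewrite /simple_path Huniq Hlast andbT.
  rewrite andbT; by apply: sub_path HP => a b /andP [].
have Hedge : edge_on src tgt e (i :: P).
  rewrite /edge_on /=; apply: has_zip_cat => /=.
  by rewrite (eqP Hq2).
have Hsz : (size P < n)%N.
  have := max_card (mem (i :: P)); rewrite card_ord (card_uniqP Huniq) /=.
  by [].
rewrite inE; apply/existsP; exists (Ordinal Hsz); apply/existsP; exists (in_tuple P).
by rewrite /= Hsimple Hedge.
Qed.
End P4.
Import P4.
Module P5.
Set Implicit Arguments. Unset Strict Implicit.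

Lemma cauchy_schwarz (R : realFieldType) (I : finType) (S : {set I}) (a : I -> R) :
  (\sum_(e in S) a e) ^+ 2 <= #|S|%:R * \sum_(e in S) a e ^+ 2.
Proof.
set A := \sum_(e in S) a e; set T := \sum_(e in S) a e ^+ 2.
have H : 0 <= \sum_(e in S) \sum_(e' in S) (a e - a e') ^+ 2.
  by apply: sumr_ge0 => e _; apply: sumr_ge0 => e' _; apply: sqr_ge0.
have E : \sum_(e in S) \sum_(e' in S) (a e - a e') ^+ 2
         = T *+ #|S| - (A * A) *+ 2 + T *+ #|S|.
  under eq_bigr => e _.
    rewrite (eq_bigr (fun e' => (a e ^+ 2 - (a e * a e') *+ 2) + a e' ^+ 2));
      last by move=> e' _; rewrite sqrrB.
    rewrite big_split /= sumrB sumr_const sumrMnl -mulr_sumr.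
    over.
  rewrite big_split /= sumrB sumr_const sumrMnl -/T -/A; congr (_ - _ + _).
  by rewrite sumrMnl -mulr_suml.
rewrite E -[T *+ _]mulr_natl -[(A * A) *+ 2]mulr_natl in H.
rewrite expr2; set k := #|S|%:R in H *.
set KT := k * T in H *. set AA := A * A in H *. lra.
Qed.

End P5.
Import P5.
Module P6.
Set Implicit Arguments. Unset Strict Implicit.

Lemma final_ineq (R : rcfType) m (Delta f : 'cV[R]_m) (S : {set 'I_m}) :
  (forall e, f e 0 != 0 -> e \in S) ->
  `|\sum_e Delta e 0 * f e 0| <= inf_norm Delta * Num.sqrt ((\sum_e f e 0 ^+ 2) * #|S|%:R).
Proof.
move=> HS.
set N := inf_norm Delta.
have HN e : `|Delta e 0| <= N by rewrite /N /inf_norm; apply: le_bigmax.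
have N0 : 0 <= N.
  rewrite /N /inf_norm; apply: (big_ind (fun y => 0 <= y)) => //.
  by move=> a b ha hb; rewrite le_max ha.
set A := \sum_(e in S) `|f e 0|.
have A0 : 0 <= A by apply: sumr_ge0.
have step1 : `|\sum_e Delta e 0 * f e 0| <= N * A.
  apply: (le_trans (ler_norm_sum _ _ _)).
  apply: (@le_trans _ _ (\sum_e N * `|f e 0|)).
    apply: ler_sum => e _; rewrite normrM; apply: ler_wpM2r => //.
  rewrite -mulr_sumr /A; apply: ler_wpM2l => //.
  rewrite [X in _ <= X]big_mkcond /=.
  apply: ler_sum => e _; case: (boolP (e \in S)) => // He.
  have -> : f e 0 = 0 by apply/eqP; apply: contraNT He; apply: HS.
  by rewrite normr0.
apply: (le_trans step1); apply: ler_wpM2l => //.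
rewrite -(ger0_norm A0) -sqrtr_sqr; apply: ler_wsqrtr.
apply: (le_trans (cauchy_schwarz _ _)); rewrite mulrC; apply: ler_wpM2r => //.
rewrite big_mkcond /=; apply: ler_sum => e _; case: (e \in S).
  by rewrite real_normK ?num_real.
by rewrite sqr_ge0.
Qed.
End P6.
Import P6.

Theorem lemma4 (R : rcfType) (n m : nat) (src tgt : 'I_m -> 'I_n)
  (Ldag : 'M[R]_n) :
  simple_graph src tgt ->
  connected_graph src tgt ->
  is_MP_pinv (laplacian R src tgt) Ldag ->
  forall (Delta : 'cV[R]_m) (i j : 'I_n),
    `| (Delta^T *m (incidence R src tgt)^T *m Ldag
          *m (basis_vec R i - basis_vec R j)) 0 0 |
    <= inf_norm Delta
       * Num.sqrt (eff_res Ldag i j * (#|path_edges src tgt i j|)%:R).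
Proof.
move=> _ Hconn [h1 h2 h3 h4] Delta i j.
set B := incidence R src tgt.
set L := laplacian R src tgt in h1 h2 h3 h4 *.
have LE : L = B *m B^T by [].
set d := basis_vec R i - basis_vec R j.
set x := Ldag *m d.
have LT : L^T = L by rewrite LE trmx_mul trmxK.
have LP : L *m (L *m Ldag) = L by rewrite -[LHS]trmxK trmx_mul h3 LT h1 LT.
have PP : L *m Ldag *m (L *m Ldag) = L *m Ldag by rewrite mulmxA h1.
set z := d - L *m x.
have Lz : L *m z = 0.
  by rewrite /z mulmxBr /x [L *m (Ldag *m d)]mulmxA mulmxA LP subrr.
have Btz : B^T *m z = 0.
  apply: sumsq0; rewrite trmx_mul trmxK mulmxA -[z^T *m B *m B^T]mulmxA -LE -mulmxA Lz mulmx0.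
  by rewrite mxE.
have adjeq a b : adj src tgt a b -> z a 0 = z b 0.
  move=> /existsP [e He].
  have Hz : z (src e) 0 = z (tgt e) 0 by apply/eqP; rewrite -subr_eq0 -(@BtE R n m src tgt z e) -/B Btz mxE.
  by case/orP: He => /andP [/eqP <- /eqP <-].
have zconst a b : z a 0 = z b 0.
  move/connectP: (Hconn a b) => [p Hp ->].
  elim: p a Hp => [|y p IH] a //= /andP [Ha Hp].
  by rewrite (adjeq _ _ Ha) IH.
have z0 : z = 0.
  apply: sumsq0.
  have E1 : z^T *m z = z^T *m d - z^T *m (L *m Ldag) *m d.
    by rewrite -mulmxA -mulmxBr /z /x mulmxA.
  have E2 : z^T *m (L *m Ldag) = 0.
    have -> : z^T *m (L *m Ldag) = (L *m Ldag *m z)^T by rewrite trmx_mul h3.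
    have -> : L *m Ldag *m z = 0.
      by rewrite /z mulmxBr /x [L *m (Ldag *m d)]mulmxA mulmxA PP subrr.
    by apply/matrixP => a b; rewrite !mxE.
  rewrite E1 E2 mul0mx subr0.
  move: zconst; clear -d; move: z => w Hw.
  rewrite mxE; under eq_bigr do rewrite !mxE mulrBr.
  by rewrite sumrB !eqxx; under eq_bigr do rewrite andbT;
    under [X in _ - X]eq_bigr do rewrite andbT; rewrite !sum_deltar (Hw i j) subrr.
have Lx : L *m x = d by apply/esym/eqP; rewrite -subr_eq0 -/z z0.
set f := B^T *m x.
have Hsupp e : f e 0 != 0 -> e \in path_edges src tgt i j.
  rewrite /f BtE subr_eq0 => Hne.
  apply: flow_support Hne; by rewrite mulmxA -LE Lx.
have Heff : eff_res Ldag i j = \sum_e f e 0 ^+ 2.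
  rewrite /eff_res -/d -mulmxA -/x -{1}Lx trmx_mul LT -sumsq /f [(B^T *m x)^T]trmx_mul trmxK LE !mulmxA.
  by [].
have Hlhs : (Delta^T *m B^T *m Ldag *m d) 0 0 = \sum_e Delta e 0 * f e 0.
  rewrite -!mulmxA -/x -/f mxE; apply: eq_bigr => e _; by rewrite mxE.
by have := final_ineq Delta Hsupp; rewrite -Hlhs -Heff.
Qed.
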